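(* Let $X,Y$ be Banach spaces and let $Z$ be a $1$-complemented subspace of $Y$. If $\mathrm{INA}_\pi(X\widehat{\otimes}_\pi Y)=X\widehat{\otimes}_\pi Y$, then $\mathrm{INA}_\pi(X\widehat{\otimes}_\pi Z)=X\widehat{\otimes}_\pi Z$.
   Context: A subspace $Z\subseteq Y$ is $1$-complemented if there is a bounded linear projection $P:Y\to Z$ with $\|P\|=1$. Definition: $u\in X\widehat{\otimes}_\pi Y$ is an integral projective norm-attaining tensor, written $u\in\mathrm{INA}_\pi(X\widehat{\otimes}_\pi Y)$, if there is a finite positive Borel measure $\mu$ on $B_X\times B_Y$ (norm topology) such that $\varphi:B_X\times B_Y\to X\widehat{\otimes}_\pi Y$, $\varphi(x,y)=x\otimes y$, is $\mu$-Bochner integrable, $u=\int_{B_X\times B_Y}x\otimes y\,d\mu(x,y)$ (Bochner integral) and $\|\mu\|=\|u\|_\pi$; then $u$ is said to be witnessed by $\mu$. *)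

(* Defs.v *)
From HB Require Import structures.
From mathcomp Require Import all_boot all_order all_algebra.
From mathcomp Require Import all_classical all_reals all_analysis.
Set Implicit Arguments. Unset Strict Implicit. Unset Printing Implicit Defensive.
Import Order.TTheory GRing.Theory Num.Theory.
Import numFieldNormedType.Exports.
Local Open Scope classical_set_scope.
Local Open Scope ring_scope.

Section ProjTensor.
Variables (R : realType) (X Y : normedModType R).

(** Bounded bilinear forms on X x Y (= the dual of X ⊗^_π Y). *)
Definition bbilinear (B : X -> Y -> R) : Prop :=
  [/\ (forall (a : R) x1 x2 y, B (a *: x1 + x2) y = a * B x1 y + B x2 y),
      (forall (a : R) x y1 y2, B x (a *: y1 + y2) = a * B x y1 + B x y2) &
      exists C : R, forall x y, `|B x y| <= C * `|x| * `|y| ].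

(** Concrete model of X ⊗^_π Y: a tensor is represented by the functional it
    induces on bounded bilinear forms; two functionals denote the same tensor
    iff they agree on all bounded bilinear forms. *)
Definition tens := (X -> Y -> R) -> R.

Definition tmul (x : X) (y : Y) : tens := fun B => B x y.

Definition teq (u v : tens) : Prop := forall B, bbilinear B -> u B = v B.

Definition trepr (xs : nat -> X) (ys : nat -> Y) (u : tens) : Prop :=
  cvg (series (fun n => `|xs n| * `|ys n|) @ \oo) /\
  forall B, bbilinear B ->
    series (fun n => B (xs n) (ys n)) @ \oo --> u B.

Definition in_ptensor (u : tens) : Prop := exists xs ys, trepr xs ys u.

Definition pnorm (u : tens) : R :=
  inf [set s : R | exists xs ys, trepr xs ys u /\
        series (fun n => `|xs n| * `|ys n|) @ \oo --> s].

Definition pointT := g_sigma_algebraType (@open (X * Y)%type).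
Definition BXY : set pointT := [set p | `|p.1| <= 1 /\ `|p.2| <= 1].

Definition simple_tens (m : nat) (A : nat -> set pointT) (U : nat -> tens)
  (p : pointT) : tens :=
  fun B => \sum_(k < m) (if `[< A k p >] then U k B else 0).

Definition tdiff (u v : tens) : tens := fun B => u B - v B.

(** Bochner integrability of phi(x,y) = x ⊗ y on B_X x B_Y w.r.t. mu:
    phi is strongly mu-measurable (mu-a.e. limit in the pi-norm of simple
    functions) and int ||phi|| dmu < oo. *)
Definition bochner_integrable_phi
  (mu : {finite_measure set pointT -> \bar R}) : Prop :=
  (exists (m : nat -> nat) (A : nat -> nat -> set pointT)
          (U : nat -> nat -> tens),
     (forall n k, measurable (A n k)) /\ (forall n k, in_ptensor (U n k)) /\
     {ae mu, forall p : pointT, BXY p ->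
        (fun n => pnorm (tdiff (tmul p.1 p.2) (simple_tens (m n) (A n) (U n) p)))
          @ \oo --> 0}) /\
  (\int[mu]_(p in BXY) (pnorm (tmul p.1 p.2))%:E < +oo)%E.

Definition witnessed (u : tens) (mu : {finite_measure set pointT -> \bar R}) :
  Prop :=
  mu (~` BXY) = 0%E /\
  bochner_integrable_phi mu /\
  (forall B, bbilinear B ->
     ((u B)%:E = \int[mu]_(p in BXY) (B p.1 p.2)%:E)%E) /\
  mu BXY = (pnorm u)%:E.

Definition INA_pi (u : tens) : Prop :=
  exists mu : {finite_measure set pointT -> \bar R}, witnessed u mu.

Definition all_INA : Prop := forall u, in_ptensor u -> INA_pi u.

End ProjTensor.

(** Z (a Banach space) is a 1-complemented subspace of Y, identified with its
    image under the linear isometric embedding J : Z -> Y; P : Y -> Z is a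
    bounded linear projection onto Z (P (J z) = z) with ||P|| = 1. *)
Definition one_complemented (R : realType) (Z Y : normedModType R)
  (J : Z -> Y) : Prop :=
  [/\ (forall (a : R) z1 z2, J (a *: z1 + z2) = a *: J z1 + J z2),
      (forall z, `|J z| = `|z|) &
      exists P : Y -> Z,
        [/\ (forall (a : R) y1 y2, P (a *: y1 + y2) = a *: P y1 + P y2),
            (forall z, P (J z) = z),
            (forall y, `|P y| <= `|y|) &
            (forall e : R, 0 < e -> exists y, `|y| <= 1 /\ 1 - e < `|P y|)]].

(* Main.v *)
Require Import Defs.
From HB Require Import structures.
From mathcomp Require Import all_boot all_order all_algebra.
From mathcomp Require Import all_classical all_reals all_analysis.
From mathcomp Require Import lra measurable_realfun.
Set Implicit Arguments. Unset Strict Implicit. Unset Printing Implicit Defensive.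
Import Order.TTheory GRing.Theory Num.Theory.
Import numFieldNormedType.Exports.
Local Open Scope classical_set_scope.
Local Open Scope ring_scope.

Section SeriesAux.
Context (R : realType).

Lemma cvg_half : (fun N => N./2) @ \oo --> \oo.
Proof.
have -> : (fun N => N./2) = (fun N => N %/ 2)%N by apply/funext => N; rewrite divn2.
exact: cvg_divnr.
Qed.

Lemma cvg_uphalf : (fun N => uphalf N) @ \oo --> \oo.
Proof.
have -> : (fun N => uphalf N) = (fun N => N./2) \o (fun N => N + 1)%N.
  by apply/funext => N /=; rewrite addn1.
apply: cvg_comp; [exact: cvg_addnr|exact: cvg_half].
Qed.

Lemma series_interleave (a b : R ^nat) (A B : R) :
  series a @ \oo --> A -> series b @ \oo --> B ->
  series (fun n => if odd n then b n./2 else a n./2) @ \oo --> A + B.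
Proof.
move=> ha hb.
set c := (fun n => if odd n then b n./2 else a n./2).
have E2 : forall k, series c k.*2 = series a k + series b k /\
                    series c k.*2.+1 = series a k.+1 + series b k.
  elim=> [|k [IH1 IH2]].
    split; first by rewrite /series /= !big_geq // addr0.
    by rewrite !seriesSr /series /= !big_geq // /c /= !add0r addr0.
  have e1 : series c k.+1.*2 = series a k.+1 + series b k.+1.
    rewrite doubleS seriesSr IH2 /c /= odd_double /= uphalf_double.
    by rewrite [series b k.+1]seriesSr addrA.
  split => //.
  by rewrite seriesSr e1 /c /= odd_double /= doubleK [series a k.+2]seriesSr addrAC.
have E : forall N, series c N = series a (uphalf N) + series b N./2.
  move=> N; rewrite -[in LHS](odd_double_half N) uphalf_half.
  case: (odd N) => /=.
    by rewrite add1n (E2 _).2.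
  by rewrite add0n (E2 _).1.
rewrite (_ : series c = (fun N => series a (uphalf N) + series b N./2)); last first.
  by apply/funext => N; rewrite E.
apply: cvgD.
  exact: (cvg_comp _ _ cvg_uphalf ha).
exact: (cvg_comp _ _ cvg_half hb).
Qed.


Lemma series_ge0_nd (a : R ^nat) : (forall n, 0 <= a n) ->
  {homo series a : n m / (n <= m)%N >-> n <= m}.
Proof.
move=> a0 n m nm; rewrite /series /= (big_cat_nat (leq0n n) nm) /=.
by rewrite lerDl sumr_ge0.
Qed.

Lemma series_lim_ge0 (a : R ^nat) (A : R) : (forall n, 0 <= a n) ->
  series a @ \oo --> A -> 0 <= A.
Proof.
move=> a0 hA; rewrite -(cvg_lim _ hA) //; apply: limr_ge; first exact: cvgP hA.
by near=> n; rewrite /series /= sumr_ge0.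
Unshelve. all: by end_near.
Qed.

Lemma series_cmp (a b : R ^nat) (A : R) :
  (forall n, 0 <= b n <= a n) -> series a @ \oo --> A ->
  exists2 B, series b @ \oo --> B & B <= A.
Proof.
move=> ba hA.
have a0 n : 0 <= a n by case/andP: (ba n) => h1 h2; exact: le_trans h2.
have b0 n : 0 <= b n by case/andP: (ba n).
have sb_le n : series b n <= A.
  apply: (@le_trans _ _ (series a n)).
    by rewrite /series /= ler_sum // => i _; case/andP: (ba i).
  rewrite -(cvg_lim _ hA) //; apply: nondecreasing_cvgn_le; last exact: cvgP hA.
  exact: series_ge0_nd.
have cb : cvgn (series b).
  apply/cvg_ex; eexists; apply: nondecreasing_cvgn; first exact: series_ge0_nd.
  by exists A => _ [n _ <-].
exists (limn (series b)) => //.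
by apply: limr_le => //; near=> n; exact: sb_le.
Unshelve. all: by end_near.
Qed.

Lemma series_first (t : R) :
  series (fun n => if n == 0%N then t else 0) @ \oo --> t.
Proof.
apply: cvg_near_cst; exists 1%N => // -[|N] //= _.
by rewrite /series /= big_nat_recl //= big1 ?addr0.
Qed.

Lemma series_ext (a b : R ^nat) : (forall n, a n = b n) -> series a = series b.
Proof. by move=> ab; apply/funext => n; rewrite /series /=; apply: eq_bigr => i _. Qed.

Lemma cvg_series_ext (a b : R ^nat) (l : R) : (forall n, a n = b n) ->
  series b @ \oo --> l -> series a @ \oo --> l.
Proof. by move=> ab; rewrite (series_ext ab). Qed.

End SeriesAux.
Arguments series_first {R} t.

Section TensAlg.
Context (R : realType) (X Y : normedModType R).
Implicit Types (B : X -> Y -> R) (u v w : tens X Y) (x : X) (y z : Y).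

Definition tadd u v : tens X Y := fun B => u B + v B.
Definition topp u : tens X Y := fun B => - u B.
Definition tzero : tens X Y := fun _ => 0.

Section BB.
Variables (B : X -> Y -> R) (hB : bbilinear B).

Lemma bb0l y : B 0 y = 0.
Proof.
case: hB => h1 _ _; have := h1 1 0 0 y; rewrite scaler0 addr0 mul1r.
by rewrite -{1}[B 0 y]addr0 => /addrI <-.
Qed.
Lemma bb0r x : B x 0 = 0.
Proof.
case: hB => _ h1 _; have := h1 1 x 0 0; rewrite scaler0 addr0 mul1r.
by rewrite -{1}[B x 0]addr0 => /addrI <-.
Qed.
Lemma bbDl x1 x2 y : B (x1 + x2) y = B x1 y + B x2 y.
Proof. by case: hB => h1 _ _; rewrite -[x1]scale1r h1 mul1r scale1r. Qed.
Lemma bbDr x y1 y2 : B x (y1 + y2) = B x y1 + B x y2.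
Proof. by case: hB => _ h1 _; rewrite -[y1]scale1r h1 mul1r scale1r. Qed.
Lemma bbZl c x y : B (c *: x) y = c * B x y.
Proof. by case: hB => h1 _ _; rewrite -[c *: x]addr0 h1 bb0l addr0. Qed.
Lemma bbZr c x y : B x (c *: y) = c * B x y.
Proof. by case: hB => _ h1 _; rewrite -[c *: y]addr0 h1 bb0r addr0. Qed.
Lemma bbNl x y : B (- x) y = - B x y.
Proof. by rewrite -scaleN1r bbZl mulN1r. Qed.
Lemma bbNr x y : B x (- y) = - B x y.
Proof. by rewrite -scaleN1r bbZr mulN1r. Qed.
Lemma bbBl x1 x2 y : B (x1 - x2) y = B x1 y - B x2 y.
Proof. by rewrite bbDl bbNl. Qed.
Lemma bbBr x y1 y2 : B x (y1 - y2) = B x y1 - B x y2.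
Proof. by rewrite bbDr bbNr. Qed.
End BB.

Definition pset u := [set s : R | exists xs ys, trepr xs ys u /\
        series (fun n => `|xs n| * `|ys n|) @ \oo --> s].

Lemma pnormE u : pnorm u = inf (pset u).
Proof. by []. Qed.

Lemma pset_ge0 u s : pset u s -> 0 <= s.
Proof.
move=> [xs [ys [_ h]]]; apply: (series_lim_ge0 _ h) => n.
by rewrite mulr_ge0.
Qed.

Lemma pnorm_ge0 u : 0 <= pnorm u.
Proof.
rewrite pnormE; have [->|/set0P ne] := eqVneq (pset u) set0; first by rewrite inf0.
by apply: lb_le_inf => // s; exact: pset_ge0.
Qed.

Lemma pnorm_le u s : pset u s -> pnorm u <= s.
Proof.
move=> hs; rewrite pnormE; apply: ge_inf => //.
by exists 0 => t; exact: pset_ge0.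
Qed.

Lemma pnorm_approx u e : in_ptensor u -> 0 < e ->
  exists2 s, pset u s & s < pnorm u + e.
Proof.
move=> [xs [ys [hc hB]]] e0; rewrite pnormE.
apply: inf_adherent => //; split.
  by exists (lim (series (fun n => `|xs n| * `|ys n|) @ \oo)), xs, ys; split => //.
by exists 0 => t; exact: pset_ge0.
Qed.

Lemma pset_in u s : pset u s -> in_ptensor u.
Proof. by move=> [xs [ys [h _]]]; exists xs, ys. Qed.

Lemma trepr_teq xs ys u v : teq u v -> trepr xs ys u -> trepr xs ys v.
Proof. by move=> uv [h1 h2]; split => // B hB; rewrite -uv //; exact: h2. Qed.

Lemma pset_teq u v : teq u v -> pset u = pset v.
Proof.
move=> uv; apply/seteqP; split => s [xs [ys [h1 h2]]]; exists xs, ys; split => //.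
  exact: trepr_teq h1.
by apply: trepr_teq h1 => B hB; rewrite uv.
Qed.

Lemma pnorm_teq u v : teq u v -> pnorm u = pnorm v.
Proof. by move=> uv; rewrite !pnormE (pset_teq uv). Qed.

Lemma in_ptensor_teq u v : teq u v -> in_ptensor u -> in_ptensor v.
Proof.
move=> uv [xs [ys h]]; exists xs, ys; exact: trepr_teq h.
Qed.

Lemma pset_tmul x y : pset (tmul x y) (`|x| * `|y|).
Proof.
exists (fun n => if n == 0%N then x else 0), (fun n => if n == 0%N then y else 0).
have E : series (fun n => `|(if n == 0%N then x else 0)| * `|(if n == 0%N then y else 0)|)
    @ \oo --> `|x| * `|y|.
  by apply: (cvg_series_ext _ (series_first _)) => -[|n] //=; rewrite normr0 mul0r.
split => //; split; first exact: cvgP E.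
move=> B hB.
by apply: (cvg_series_ext _ (series_first _)) => -[|n] //=; rewrite bb0l.
Qed.

Lemma in_ptensor_tmul x y : in_ptensor (tmul x y).
Proof. exact: pset_in (pset_tmul x y). Qed.

Lemma pnorm_tmul_le x y : pnorm (tmul x y) <= `|x| * `|y|.
Proof. exact: pnorm_le (pset_tmul x y). Qed.

Lemma pset_zero : pset tzero 0.
Proof.
exists (fun _ => 0), (fun _ => 0).
have E : series (fun n : nat => `|(0 : X)| * `|(0 : Y)|) @ \oo --> (0 : R).
  by apply: (cvg_series_ext _ (series_first 0)) => -[|n] //=; rewrite normr0 mul0r.
split => //; split; first exact: cvgP E.
move=> B hB.
by apply: (cvg_series_ext _ (series_first _)) => -[|n] //=; rewrite bb0l.
Qed.

Lemma in_ptensor_zero : in_ptensor tzero.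
Proof. exact: pset_in pset_zero. Qed.

Lemma pset_add u v s1 s2 : pset u s1 -> pset v s2 -> pset (tadd u v) (s1 + s2).
Proof.
move=> [xs [ys [[_ hu] h1]]] [xs' [ys' [[_ hv] h2]]].
exists (fun n => if odd n then xs' n./2 else xs n./2).
exists (fun n => if odd n then ys' n./2 else ys n./2).
have E : series (fun n => `|(if odd n then xs' n./2 else xs n./2)| *
                   `|(if odd n then ys' n./2 else ys n./2)|) @ \oo --> s1 + s2.
  by apply: (cvg_series_ext _ (series_interleave h1 h2)) => n; case: (odd n).
split => //; split; first exact: cvgP E.
move=> B hB.
by apply: (cvg_series_ext _ (series_interleave (hu B hB) (hv B hB))) => n; case: (odd n).
Qed.

Lemma in_ptensor_add u v : in_ptensor u -> in_ptensor v -> in_ptensor (tadd u v).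
Proof.
move=> [xs [ys [h1 h1']]] [xs' [ys' [h2 h2']]].
apply: (@pset_in _ _ (pset_add _ _)).
  by exists xs, ys; split; [split|exact: h1].
by exists xs', ys'; split; [split|exact: h2].
Qed.

Lemma pnorm_add_le u v : in_ptensor u -> in_ptensor v ->
  pnorm (tadd u v) <= pnorm u + pnorm v.
Proof.
move=> iu iv; apply/ler_addgt0Pr => e e0.
have e20 : 0 < e / 2 by rewrite divr_gt0.
have [s1 ps1 l1] := pnorm_approx iu e20.
have [s2 ps2 l2] := pnorm_approx iv e20.
apply: (le_trans (pnorm_le (pset_add ps1 ps2))).
have -> : pnorm u + pnorm v + e = (pnorm u + e / 2) + (pnorm v + e / 2).
  by rewrite addrACA -splitr.
by rewrite ltW // ltrD.
Qed.

Lemma pset_opp u s : pset u s -> pset (topp u) s.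
Proof.
move=> [xs [ys [[c hu] h]]]; exists (fun n => - xs n), ys.
split; last by apply: (cvg_series_ext _ h) => n; rewrite normrN.
split; first by apply: cvgP; apply: (cvg_series_ext _ h) => n; rewrite normrN.
move=> B hB.
have -> : series (fun n => B (- xs n) (ys n)) = (fun N => - series (fun n => B (xs n) (ys n)) N).
  by apply/funext => n; rewrite /series /= -sumrN; apply: eq_bigr => i _; rewrite bbNl.
exact: cvgN (hu B hB).
Qed.

Lemma in_ptensor_opp u : in_ptensor u -> in_ptensor (topp u).
Proof.
move=> [xs [ys [h1 h1']]]; apply: (@pset_in _ _ (pset_opp _)).
by exists xs, ys; split; [split|exact: h1].
Qed.

Lemma tdiffE u v : tdiff u v = tadd u (topp v).
Proof. by []. Qed.

Lemma in_ptensor_diff u v : in_ptensor u -> in_ptensor v -> in_ptensor (tdiff u v).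
Proof. by move=> iu iv; rewrite tdiffE; apply: in_ptensor_add => //; exact: in_ptensor_opp. Qed.

Lemma pnorm_diff_tri u v w : in_ptensor u -> in_ptensor v -> in_ptensor w ->
  pnorm (tdiff u w) <= pnorm (tdiff u v) + pnorm (tdiff v w).
Proof.
move=> iu iv iw.
have -> : tdiff u w = tadd (tdiff u v) (tdiff v w).
  by apply/funext => B; rewrite /tadd /tdiff addrA subrK.
by apply: pnorm_add_le; exact: in_ptensor_diff.
Qed.

Lemma pnorm_diff_sym u v : pnorm (tdiff u v) = pnorm (tdiff v u).
Proof.
rewrite !pnormE; congr inf; apply/seteqP; split => s /pset_opp;
  by congr pset; apply/funext => B; rewrite /topp /tdiff opprB.
Qed.

Lemma teq_tmul_diff x z x' z' :
  teq (tdiff (tmul x z) (tmul x' z')) (tadd (tmul (x - x') z) (tmul x' (z - z'))).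
Proof.
move=> B hB; rewrite /tdiff /tadd /tmul bbBl // bbBr //.
by rewrite addrA subrK.
Qed.

Lemma pnorm_tmul_diff x z x' z' :
  pnorm (tdiff (tmul x z) (tmul x' z')) <= `|x - x'| * `|z| + `|x'| * `|z - z'|.
Proof.
rewrite (pnorm_teq (teq_tmul_diff x z x' z')).
apply: le_trans (pnorm_add_le (in_ptensor_tmul _ _) (in_ptensor_tmul _ _)) _.
by apply: lerD; exact: pnorm_tmul_le.
Qed.

End TensAlg.

Section TensMap.
Context (R : realType) (X Y1 Y2 : normedModType R) (L : Y1 -> Y2).
Hypothesis hL : forall (a : R) y1 y2, L (a *: y1 + y2) = a *: L y1 + L y2.
Hypothesis hLn : forall y, `|L y| <= `|y|.

Definition tmap (u : tens X Y1) : tens X Y2 := fun B => u (fun x y => B x (L y)).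

Lemma bbilinear_comp (B : X -> Y2 -> R) : bbilinear B -> bbilinear (fun x y => B x (L y)).
Proof.
move=> hB; case: (hB) => h1 h2 [C hC]; split.
- by move=> a x1 x2 y; rewrite h1.
- by move=> a x y1 y2; rewrite hL h2.
- exists `|C| => x y; apply: (le_trans (hC x (L y))).
  rewrite -mulrA -[X in _ <= X]mulrA.
  apply: (@le_trans _ _ (`|C| * (`|x| * `|L y|))).
    by rewrite ler_wpM2r ?mulr_ge0 // ler_norm.
  by rewrite ler_wpM2l // ler_wpM2l.
Qed.

Lemma pset_map u s : pset u s -> exists2 s', pset (tmap u) s' & s' <= s.
Proof.
move=> [xs [ys [[c hu] h]]].
have [s' hs' le] := @series_cmp R (fun n => `|xs n| * `|ys n|)
   (fun n => `|xs n| * `|L (ys n)|) s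
   (fun n => ltac:(by rewrite mulr_ge0 //= ler_wpM2l)) h.
exists s' => //; exists xs, (fun n => L (ys n)); split => //; split.
  exact: cvgP hs'.
by move=> B hB; apply: (hu (fun x y => B x (L y))); exact: bbilinear_comp.
Qed.

Lemma in_ptensor_map u : in_ptensor u -> in_ptensor (tmap u).
Proof.
move=> iu; have [s ps _] := pnorm_approx iu ltr01.
by have [s' ps' _] := pset_map ps; exact: pset_in ps'.
Qed.

Lemma pnorm_map_le u : in_ptensor u -> pnorm (tmap u) <= pnorm u.
Proof.
move=> iu; apply/ler_addgt0Pr => e e0.
have [s ps le] := pnorm_approx iu e0.
have [s' ps' le'] := pset_map ps.
by apply: (le_trans (pnorm_le ps')); apply: (le_trans le'); exact: ltW.
Qed.

End TensMap.

Section Topo.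
Context (R : realType) (X Z : normedModType R).

Lemma near_comp (q : X * Z) (d : R) : 0 < d ->
  \forall t \near q, `|q.1 - t.1| < d /\ `|q.2 - t.2| < d.
Proof.
move=> d0.
have h1 : fst @ q --> q.1 by exact: cvg_fst.
have h2 : snd @ q --> q.2 by exact: cvg_snd.
move/cvgrPdist_lt : (h1) => /(_ d d0) H1.
move/cvgrPdist_lt : (h2) => /(_ d d0) H2.
by near=> t; split; [near: t; exact: H1|near: t; exact: H2].
Unshelve. all: by end_near.
Qed.

Lemma lip_continuous (g : X * Z -> R) (K : R) : 0 <= K ->
  (forall x z x' z', `|g (x, z) - g (x', z')| <= K * (`|x - x'| * `|z| + `|x'| * `|z - z'|)) ->
  continuous g.
Proof.
move=> K0 hg [x z]; apply/cvgrPdist_lt => e e0.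
set M := K * (`|z| + `|x| + 1).
have M0 : 0 <= M by rewrite mulr_ge0 // addr_ge0 // addr_ge0.
set d := Num.min 1 (e / (M + 1)).
have d0 : 0 < d by rewrite lt_min ltr01 divr_gt0 // ltr_wpDl.
have d1 : d <= 1 by rewrite ge_min lexx.
have de : d <= e / (M + 1) by rewrite ge_min lexx orbT.
near=> t.
have [h1 h2] : `|x - t.1| < d /\ `|z - t.2| < d by near: t; exact: (near_comp (x, z)).
have := hg x z t.1 t.2; rewrite -surjective_pairing => hg'.
move: h1 h2 hg'; set x' := t.1; set z' := t.2 => h1 h2 hg'.
apply: (le_lt_trans hg').
have hx' : `|x'| <= `|x| + d.
  have -> : x' = x - (x - x') by rewrite subKr.
  by apply: (le_trans (ler_normB _ _)); rewrite lerD2l ltW.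
have : K * (`|x - x'| * `|z| + `|x'| * `|z - z'|) <= M * d.
  rewrite /M -mulrA ler_wpM2l // mulrDl mulrDl mul1r.
  rewrite -addrA; apply: lerD.
    by rewrite mulrC ler_wpM2l // ltW.
  apply: (@le_trans _ _ ((`|x| + d) * d)).
    by apply: ler_pM => //; exact: ltW.
  by rewrite mulrDl lerD2l -[X in _ <= X]mul1r ler_wpM2r // ltW.
move/le_lt_trans; apply.
apply: (@le_lt_trans _ _ (M * (e / (M + 1)))); first by rewrite ler_wpM2l.
have M1 : 0 < M + 1 by rewrite ltr_wpDl.
by rewrite mulrA ltr_pdivrMr // mulrC ltr_pM2l // ltrDl.
Unshelve. all: by end_near.
Qed.

End Topo.

Section Mble.
Context (R : realType) (X Z : normedModType R).

Lemma open_mble (A : set (X * Z)) : open A -> measurable (A : set (pointT X Z)).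
Proof. by move=> oA; apply: sub_sigma_algebra. Qed.

Lemma cont_mble (g : X * Z -> R) : continuous g ->
  measurable_fun setT (g : pointT X Z -> R).
Proof.
move=> /continuousP cg; apply: (measurability _ (measurable_realfun.RGenOpens.measurableE R)).
move=> _ [_ [a [b ->]] <-]; apply: measurableI => //.
by apply: open_mble; apply: cg; exact: interval_open.
Qed.

Lemma cont_mble_lt (f g : X * Z -> R) : continuous f -> continuous g ->
  measurable ([set q | f q < g q] : set (pointT X Z)).
Proof.
move=> cf cg; apply: open_mble.
have -> : [set q | f q < g q] = (fun q => g q - f q) @^-1` `]0, +oo[.
  by apply/seteqP; split => q /=; rewrite in_itv /= andbT subr_gt0.
have : continuous (fun q => g q - f q).
  by move=> q; apply: cvgB; [exact: cg|exact: cf].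
by move/continuousP; apply; exact: interval_open.
Qed.

Lemma cont_mble_le (f g : X * Z -> R) : continuous f -> continuous g ->
  measurable ([set q | f q <= g q] : set (pointT X Z)).
Proof.
move=> cf cg; have -> : [set q | f q <= g q] = ~` [set q | g q < f q].
  apply/seteqP; split => q /=; first by move=> h; rewrite ltNge h.
  by move/negP; rewrite -leNgt.
by apply: measurableC; exact: cont_mble_lt.
Qed.

Lemma cont_fst_norm : continuous (fun q : X * Z => `|q.1|).
Proof.
move=> q; have h1 : fst @ q --> q.1 by exact: cvg_fst.
have := @continuous_comp _ _ _ fst (fun x : X => `|x|) q h1 (@norm_continuous _ _ _).
by [].
Qed.

Lemma cont_snd_norm : continuous (fun q : X * Z => `|q.2|).
Proof.
move=> q; have h1 : snd @ q --> q.2 by exact: cvg_snd.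
have := @continuous_comp _ _ _ snd (fun x : Z => `|x|) q h1 (@norm_continuous _ _ _).
by [].
Qed.

Lemma BXY_mble : measurable (@BXY R X Z).
Proof.
have -> : @BXY R X Z = [set q | `|q.1| <= 1] `&` [set q | `|q.2| <= 1] by [].
apply: measurableI.
  by apply: (cont_mble_le cont_fst_norm) => q; exact: cvg_cst.
by apply: (cont_mble_le cont_snd_norm) => q; exact: cvg_cst.
Qed.

End Mble.

Lemma cont_mble_map (R : realType) (X Y Z : normedModType R) (T : X * Y -> X * Z) :
  continuous T -> measurable_fun setT (T : pointT X Y -> pointT X Z).
Proof.
move=> /continuousP cT.
have := @measurability _ _ (pointT X Y) (pointT X Z) setT T (@open (X * Z)%type).
move=> H; apply: H.
  by [].
move=> _ [A oA <-]; apply: measurableI => //.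
by apply: open_mble; exact: cT.
Qed.

Section PushFin.
Context d1 d2 (T1 : measurableType d1) (T2 : measurableType d2) (R : realType).
Variables (mu : {finite_measure set T1 -> \bar R}) (f : {mfun T1 >-> T2}).

Definition pfw := pushforward mu f.

Let pfw0 : pfw set0 = 0%E.
Proof. by rewrite /pfw /pushforward preimage_set0 measure0. Qed.

Let pfw_ge0 A : (0 <= pfw A)%E.
Proof. by apply: measure_ge0. Qed.

Let pfw_sigma_additive : semi_sigma_additive pfw.
Proof.
move=> F mF tF mUF; rewrite /pfw /pushforward preimage_bigcup.
apply: measure_semi_sigma_additive.
- by move=> n; rewrite -[X in measurable X]setTI; exact: measurable_funP.
- apply/trivIsetP => /= i j _ _ ij; rewrite -preimage_setI.
  by move/trivIsetP : tF => /(_ _ _ _ _ ij) ->//; rewrite preimage_set0.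
- by rewrite -preimage_bigcup -[X in measurable X]setTI; exact: measurable_funP.
Qed.

HB.instance Definition _ := isMeasure.Build _ _ _ pfw pfw0 pfw_ge0 pfw_sigma_additive.

Let pfw_fin : fin_num_fun pfw.
Proof.
move=> A mA; rewrite /pfw /pushforward; apply: fin_num_measure.
by rewrite -[X in measurable X]setTI; exact: measurable_funP.
Qed.

HB.instance Definition _ := Measure_isFinite.Build _ _ _ pfw pfw_fin.

End PushFin.

Lemma argmin_first (R : realType) (f : nat -> R) n : (0 < n)%N ->
  exists k, [/\ (k < n)%N, (forall l, (l < n)%N -> f k <= f l) &
                (forall l, (l < k)%N -> f k < f l)].
Proof.
case: n => // n _; elim: n => [|n [k [kn h1 h2]]].
  by exists 0%N; split => // l; rewrite ltnS leqn0 => /eqP ->.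
case: (ltP (f n.+1) (f k)) => hk.
  exists n.+1; split => // l.
    rewrite ltnS leq_eqVlt => /orP[/eqP ->//|/h1]; exact: (le_trans (ltW hk)).
  by rewrite ltnS => /h1; exact: (lt_le_trans hk).
exists k; split => //; first exact: (ltn_trans kn).
by move=> l; rewrite ltnS leq_eqVlt => /orP[/eqP ->//|/h1].
Qed.

Lemma argmin_uniq (R : realType) (f : nat -> R) n k1 k2 :
  (k1 < n)%N -> (k2 < n)%N ->
  (forall l, (l < n)%N -> f k1 <= f l) -> (forall l, (l < k1)%N -> f k1 < f l) ->
  (forall l, (l < n)%N -> f k2 <= f l) -> (forall l, (l < k2)%N -> f k2 < f l) ->
  k1 = k2.
Proof.
move=> k1n k2n a1 b1 a2 b2; case: (ltngtP k1 k2) => // h.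
  by have := b2 _ h; rewrite ltNge a1.
by have := b1 _ h; rewrite ltNge a2.
Qed.

Lemma mble_imp d (T : measurableType d) (b : bool) (S : set T) :
  measurable S -> measurable [set q | b -> S q].
Proof.
case: b => mS.
  by have -> : [set q | true -> S q] = S by apply/seteqP; split => q //= h; exact: h.
by have -> : [set q : T | false -> S q] = setT by apply/seteqP; split => q.
Qed.

Section Cont.
Context (R : realType) (X Z : normedModType R).

Lemma bb_continuous (B : X -> Z -> R) : bbilinear B ->
  continuous (fun q : X * Z => B q.1 q.2).
Proof.
move=> hB; case: (hB) => _ _ [C hC].
apply: (@lip_continuous R X Z (fun q => B q.1 q.2) `|C|) => // x z x' z' /=.
have -> : B x z - B x' z' = B (x - x') z + B x' (z - z').
  by rewrite (bbBl hB) (bbBr hB) addrA subrK.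
apply: (le_trans (ler_normD _ _)); rewrite mulrDr; apply: lerD.
  apply: (le_trans (hC _ _)); rewrite -mulrA ler_wpM2r ?mulr_ge0 //; exact: ler_norm.
apply: (le_trans (hC _ _)); rewrite -mulrA ler_wpM2r ?mulr_ge0 //; exact: ler_norm.
Qed.

Lemma pdist_continuous (F : tens X Z) : in_ptensor F ->
  continuous (fun q : X * Z => pnorm (tdiff (tmul q.1 q.2) F)).
Proof.
move=> iF.
apply: (@lip_continuous R X Z _ 1) => // x z x' z' /=; rewrite mul1r.
apply: le_trans (pnorm_tmul_diff x z x' z').
have i1 := in_ptensor_tmul x z; have i2 := in_ptensor_tmul x' z'.
have t1 := pnorm_diff_tri i1 i2 iF.
have t2 := pnorm_diff_tri i2 i1 iF.
rewrite (pnorm_diff_sym (tmul x' z') (tmul x z)) in t2.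
rewrite ler_norml; apply/andP; split; lra.
Qed.

End Cont.

Lemma lin_continuous (R : realType) (Y Z : normedModType R) (P : Y -> Z) :
  (forall (a : R) y1 y2, P (a *: y1 + y2) = a *: P y1 + P y2) ->
  (forall y, `|P y| <= `|y|) -> continuous P.
Proof.
move=> hP hn y.
have PB y1 y2 : P y1 - P y2 = P (y1 - y2).
  have P0 : P 0 = 0.
    have := hP 1 0 0; rewrite scaler0 addr0 scale1r.
    by rewrite -{1}[P 0]addr0 => /addrI <-.
  have PN : P (- y2) = - P y2.
    by have := hP (-1) y2 0; rewrite addr0 P0 addr0 !scaleN1r.
  by have := hP 1 y1 (- y2); rewrite !scale1r PN => ->.
apply/cvgrPdist_lt => e e0.
have h : (fun t : Y => t) @ y --> y by exact: cvg_id.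
move/cvgrPdist_lt: h => /(_ e e0) h.
near=> t; rewrite PB; apply: (le_lt_trans (hn _)); near: t; exact: h.
Unshelve. all: by end_near.
Qed.

Lemma T_continuous (R : realType) (X Y Z : normedModType R) (P : Y -> Z) :
  continuous P -> continuous (fun p : X * Y => (p.1, P p.2)).
Proof.
move=> cP p.
have h1 : fst @ p --> p.1 by exact: cvg_fst.
have h2 : snd @ p --> p.2 by exact: cvg_snd.
have h3 := @continuous_comp _ _ _ snd P p h2 (cP _).
exact: (cvg_pair h1 h3).
Qed.

Lemma in_ptensor_sum (R : realType) (X Y : normedModType R) (M : nat)
  (b : nat -> bool) (U : nat -> tens X Y) : (forall k, in_ptensor (U k)) ->
  in_ptensor (fun B => \sum_(k < M) (if b k then U k B else 0)).
Proof.
move=> iU; elim: M => [|M IH].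
  have -> : (fun B => \sum_(k < 0) (if b k then U k B else 0)) = (@tzero R X Y).
    by apply/funext => B; rewrite big_ord0.
  exact: in_ptensor_zero.
have -> : (fun B => \sum_(k < M.+1) (if b k then U k B else 0)) =
  tadd (fun B => \sum_(k < M) (if b k then U k B else 0))
       (if b M then U M else (@tzero R X Y)).
  by apply/funext => B; rewrite big_ord_recr /tadd /=; case: (b M).
apply: in_ptensor_add => //; case: (b M) => //; exact: in_ptensor_zero.
Qed.

Theorem corollary2p10 (R : realType) (X Y Z : completeNormedModType R)
  (J : Z -> Y) :
  one_complemented J ->
  all_INA X Y -> all_INA X Z.
Proof.
case=> hJ hJn [P [hP hPJ hPn _]] hall u iu.
have hJle : forall z, `|J z| <= `|z| by move=> z; rewrite hJn.
pose v := tmap J u.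
have iv : in_ptensor v := in_ptensor_map hJ hJle iu.
have uPv : tmap P v = u.
  apply/funext => B; rewrite /tmap /v; congr u.
  by apply/funext => x; apply/funext => z; rewrite hPJ.
have nuv : pnorm v = pnorm u.
  apply/le_anti/andP; split; first exact: pnorm_map_le.
  by rewrite -{1}uPv; exact: pnorm_map_le.
have [mu [mu0 [hbo [hint hmass]]]] := hall v iv.
pose T0 := fun p : X * Y => (p.1, P p.2).
have cP := lin_continuous hP hPn.
have cT : continuous T0 := T_continuous cP.
pose T : pointT X Y -> pointT X Z := T0.
have mT : measurable_fun setT T := cont_mble_map cT.
pose Tm : {mfun pointT X Y >-> pointT X Z} := HB.pack T (isMeasurableFun.Build _ _ _ _ T mT).
pose nu := pfw mu Tm.
exists nu.
have nuE : forall A, nu A = mu (T @^-1` A) by [].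
have mBY := @BXY_mble R X Y; have mBZ := @BXY_mble R X Z.
have TB : forall p : pointT X Y, BXY p -> BXY (T p : pointT X Z).
  by move=> p [h1 h2]; split => //=; exact: le_trans (hPn _) h2.
have mTpre : forall A : set (pointT X Z), measurable A ->
    measurable (T @^-1` A : set (pointT X Y)).
  by move=> A mA; rewrite -[X in measurable X]setTI; exact: (mT measurableT A mA).
split; [|split; [|split]].
- have h : (mu (T @^-1` (~` (@BXY _ X Z))) <= mu (~` (@BXY _ X Y)))%E.
    apply: le_measure; rewrite ?inE.
    + by apply: mTpre; exact: measurableC.
    + exact: measurableC.
    + by move=> p /= hp hb; apply: hp; exact: TB.
  apply/le_anti/andP; split; last exact: measure_ge0.
  by move: h; rewrite mu0.
- case: hbo => [[m [A [U [hA [hU hae]]]]] hfin].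
  case: hae => N [mN muN hN].
  pose I := (nat * seq bool)%type.
  pose W (i : I) : tens X Y :=
    fun B => \sum_(k < m i.1) (if nth false i.2 k then U i.1 k B else 0).
  have iW : forall i, in_ptensor (W i) by move=> i; apply: in_ptensor_sum.
  pose F (j : nat) : tens X Z :=
    if @pickle_inv I j is Some i then tmap P (W i) else @tzero R X Z.
  have iF : forall j, in_ptensor (F j).
    move=> j; rewrite /F; case: (pickle_inv j) => [i|]; last exact: in_ptensor_zero.
    exact: in_ptensor_map.
  pose f (j : nat) (q : X * Z) : R := pnorm (tdiff (tmul q.1 q.2) (F j)).
  have cf : forall j, continuous (f j) by move=> j; exact: pdist_continuous.
  have f0 : forall j q, 0 <= f j q by move=> j q; exact: pnorm_ge0.
  pose A' (n k : nat) : set (pointT X Z) :=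
    [set q | (forall l, (l < n)%N -> f k q <= f l q) /\ (forall l, (l < k)%N -> f k q < f l q)].
  have mA' : forall n k, measurable (A' n k).
    move=> n k.
    have -> : A' n k = \bigcap_l ([set q | (l < n)%N -> f k q <= f l q] `&`
                                   [set q | (l < k)%N -> f k q < f l q]).
      apply/seteqP; split => q.
        by move=> [h1 h2] l _; split => /= hl; [exact: h1|exact: h2].
      move=> h; split => l hl; have [h1 h2] := h l Logic.I; [exact: h1|exact: h2].
    apply: bigcapT_measurable => l; apply: measurableI; apply: mble_imp.
      exact: cont_mble_le.
    exact: cont_mble_lt.
  have good_conv : forall q : pointT X Z, (forall e, 0 < e -> exists j, f j q < e) ->
      (fun n => pnorm (tdiff (tmul q.1 q.2) (simple_tens n (A' n) F q))) @ \oo --> 0.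
    move=> q good; apply/cvgrPdist_lt => e e0.
    have [j hj] := good e e0.
    near=> n.
    have nj : (j < n)%N by near: n; exists j.+1.
    have n0 : (0 < n)%N by apply: leq_ltn_trans nj.
    have [k0 [k0n a b]] := argmin_first (fun l => f l q) n0.
    have Eq : simple_tens n (A' n) F q = F k0.
      apply/funext => B; rewrite /simple_tens (bigD1 (Ordinal k0n)) //= big1 ?addr0.
        by rewrite asboolT //; split.
      move=> i /eqP ne; rewrite asboolF //; move=> [a' b']; apply: ne.
      apply: val_inj => /=; exact: (argmin_uniq (ltn_ord i) k0n a' b' a b).
    rewrite Eq sub0r normrN ger0_norm; last exact: f0.
    exact: le_lt_trans (a j nj) hj.
  pose E : set (pointT X Z) :=
    \bigcup_k \bigcap_j [set q | (k.+1%:R)^-1 <= f j q].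
  have mE : measurable E.
    apply: bigcupT_measurable => k; apply: bigcapT_measurable => j.
    by apply: cont_mble_le => //; move=> q; exact: cvg_cst.
  have good_of_notE : forall q, ~ E q -> forall e, 0 < e -> exists j, f j q < e.
    move=> q nE e e0; apply: contrapT => hne; apply: nE.
    have [k hk] : exists k : nat, (k.+1%:R)^-1 < e.
      by have [K _ hK] := near_infty_natSinv_lt (PosNum e0); exists K; exact: (hK K (leqnn K)).
    exists k => // j _ /=; apply: (le_trans (ltW hk)); rewrite leNgt; apply/negP => h.
    by apply: hne; exists j.
  split.
    exists (fun n => n), A', (fun _ => F); split => //; split => //.
    exists E; split => //.
      have h : (mu (T @^-1` E) <= mu (N `|` ~` (@BXY _ X Y)))%E.
        apply: le_measure; rewrite ?inE.
        + exact: mTpre.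
        + by apply: measurableU => //; exact: measurableC.
        move=> p /= hp; apply: contrapT => hp'.
        have nNp : ~ N p by move=> h; apply: hp'; left.
        have Bp : BXY p by apply: contrapT => h; apply: hp'; right.
        have cp : (fun n => pnorm (tdiff (tmul p.1 p.2) (simple_tens (m n) (A n) (U n) p))) @ \oo --> 0.
          by apply: contrapT => c; apply: nNp; apply: hN => /(_ Bp).
        case: hp => k _ hk.
        have ek : 0 < (k.+1%:R : R)^-1 by rewrite invr_gt0 ltr0Sn.
        move/cvgrPdist_lt: cp => /(_ _ ek) [n0 _ hn0].
        have hn := hn0 n0 (leqnn n0).
        pose s := [seq `[< A n0 k' p >] | k' <- iota 0 (m n0)].
        pose j := pickle ((n0, s) : I).
        have Fj : F j = tmap P (W (n0, s)) by rewrite /F /j pickleK_inv.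
        have Ws : W (n0, s) = simple_tens (m n0) (A n0) (U n0) p.
          apply/funext => B; rewrite /W /simple_tens /=; apply: eq_bigr => k' _.
          by rewrite (nth_map 0%N) ?size_iota // nth_iota // add0n.
        have iS : in_ptensor (simple_tens (m n0) (A n0) (U n0) p) by rewrite -Ws.
        have := hk j Logic.I; rewrite /f Fj Ws /= => hle.
        have h3 : pnorm (tdiff (tmul p.1 (P p.2)) (tmap P (simple_tens (m n0) (A n0) (U n0) p)))
            <= pnorm (tdiff (tmul p.1 p.2) (simple_tens (m n0) (A n0) (U n0) p)).
          exact: (pnorm_map_le hP hPn (in_ptensor_diff (in_ptensor_tmul _ _) iS)).
        move: hn; rewrite sub0r normrN ger0_norm; last exact: pnorm_ge0.
        move=> hn; have := le_lt_trans (le_trans hle h3) hn.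
        by rewrite ltxx.
      have h2 : (mu (N `|` ~` (@BXY _ X Y)) <= mu N + mu (~` (@BXY _ X Y)))%E.
        by apply: measureU2 => //; exact: measurableC.
      apply/le_anti/andP; split; last exact: measure_ge0.
      by move: (le_trans h h2); rewrite muN mu0 addr0.
    move=> q /= hq; apply: contrapT => nE; apply: hq => _; apply: good_conv.
    exact: good_of_notE.
  have g_eq : (fun q : pointT X Z => (pnorm (tmul q.1 q.2))%:E) =
      (fun q : pointT X Z => (pnorm (tdiff (tmul q.1 q.2) (@tzero R X Z)))%:E).
    apply/funext => q; congr (_%:E); congr pnorm.
    by apply/funext => B; rewrite /tdiff /tzero subr0.
  have mg : measurable_fun setT (fun q : pointT X Z => (pnorm (tmul q.1 q.2))%:E).
    rewrite g_eq; apply/measurable_EFinP; apply: cont_mble.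
    exact: pdist_continuous (in_ptensor_zero X Z).
  apply: (@le_lt_trans _ _ (\int[nu]_(q in @BXY _ X Z) (cst 1%:E) q)%E).
    apply: ge0_le_integral => //.
    - by move=> q _; rewrite lee_fin; exact: pnorm_ge0.
    - exact: measurable_funTS.
    - move=> q [h1 h2]; rewrite lee_fin; apply: (le_trans (pnorm_tmul_le _ _)).
      by apply: mulr_ile1.
  rewrite integral_cst // mul1e.
  have := fin_num_measure nu _ mBZ; rewrite ge0_fin_numE //; exact: measure_ge0.
- move=> B hB.
  have hB' := bbilinear_comp hP hPn hB.
  have e1 : u B = v (fun x y => B x (P y)) by rewrite -{1}uPv.
  rewrite e1 hint //.
  pose h : pointT X Z -> \bar R := fun q => (B q.1 q.2)%:E.
  have mh : measurable_fun setT h.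
    by apply/measurable_EFinP; apply: cont_mble; exact: bb_continuous.
  have key : forall g : pointT X Z -> \bar R, measurable_fun setT g ->
      (forall q, 0 <= g q)%E ->
      (\int[nu]_(q in @BXY _ X Z) g q = \int[mu]_(p in @BXY _ X Y) g (T p))%E.
    move=> g mg g0.
    have -> : (\int[nu]_(q in @BXY _ X Z) g q = \int[pushforward mu T]_(q in @BXY _ X Z) g q)%E by [].
    rewrite (ge0_integral_pushforward mT) //; last exact: measurable_funTS.
    rewrite (@ge0_negligible_integral _ _ _ mu _ (~` (@BXY _ X Y))) //.
    + congr (integral _ _ _); apply/seteqP; split => p /=.
        by case=> _ /contrapT.
      by move=> hp; split; [exact: TB|move/(_ hp)].
    + exact: measurableC.
    + exact: mTpre.
    + by apply: measurableT_comp => //; exact: measurable_funTS.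
    + by move=> p _; exact: g0.
  rewrite [X in _ = X]integralE !key //; first last.
  all: try (by move=> q; exact: funeneg_ge0).
  all: try (by move=> q; exact: funepos_ge0).
  all: try exact: measurable_funeneg.
  all: try exact: measurable_funepos.
  rewrite [X in X = _]integralE; congr (_ - _)%E; apply: eq_integral => p _.
    by rewrite !funeposE.
  by rewrite !funenegE.
- rewrite -nuv -hmass; change (mu (T @^-1` (@BXY _ X Z)) = mu (@BXY _ X Y)).
  have h1 : (mu (T @^-1` (@BXY _ X Z)) <= mu setT)%E.
    by apply: le_measure; rewrite ?inE //; exact: mTpre.
  have h2 : (mu (@BXY _ X Y) <= mu (T @^-1` (@BXY _ X Z)))%E.
  { apply: le_measure; rewrite ?inE //.
    all: try exact: mTpre.
    all: by move=> p /TB. }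
  have h3 : mu setT = mu (@BXY _ X Y).
  { rewrite -(setUv (@BXY _ X Y)) measureU //; first by rewrite [X in (_ + X)%R]mu0 addr0.
    all: try exact: measurableC.
    all: by rewrite setICr. }
  by apply/le_anti; rewrite h2 -h3 h1.
Unshelve. all: by end_near.
Qed.
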